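(* For a restless bandit as in the context, every $i\in N$ and $S\subseteq N^{\{0,1\}}$: $$b^{S\cup\{j\}}_i=b^S_i+w^S_j\,x^{1,S\cup\{j\}}_{ij},\quad j\in N^{\{0,1\}}\setminus S;\qquad b^S_i=b^{S\setminus\{j\}}_i+w^S_j\,x^{0,S\setminus\{j\}}_{ij},\quad j\in S.$$
   Context: Restless bandit: finite state space $N=N^{\{0,1\}}\cup N^{\{1\}}$ (disjoint); actions $a\in\{0,1\}$; transition probabilities $p^a_{ij}$ with $p^1_{ij}=p^0_{ij}$ for $i\in N^{\{1\}}$; discount factor $\beta\in(0,1)$; activity weights $\theta^1_j>0$. Stationary policies $u:N\to[0,1]$ with $u(i)=1$ on $N^{\{1\}}$. $b^u_i=E^u_i[\sum_{t\ge0}\theta^1_{X(t)}a(t)\beta^t]$, $x^{a,u}_{ij}=E^u_i[\sum_{t\ge0}1\{X(t)=j,a(t)=a\}\beta^t]$. For $S\subseteq N^{\{0,1\}}$ the $S$-active policy is active on $S\cup N^{\{1\}}$ and passive elsewhere; superscript $S$ denotes its measures. Marginal workloads: $w^S_i=\theta^1_i1\{i\in N^{\{0,1\}}\}+\beta\sum_{j}(p^1_{ij}-p^0_{ij})b^S_j$. *)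

(* Defs.v *)
From HB Require Import structures.
From mathcomp Require Import all_boot all_order all_algebra.
From mathcomp Require Import all_classical all_reals all_analysis.
Set Implicit Arguments. Unset Strict Implicit. Unset Printing Implicit Defensive.
Import Order.TTheory GRing.Theory Num.Theory numFieldNormedType.Exports.
Local Open Scope ring_scope.

(* Restless bandit project:
   - finite state space T (= N); N1 : {set T} is N^{1}; N^{0,1} = ~: N1;
   - actions a : bool (true = active = 1, false = passive = 0);
   - p a i j = p^a_{ij}; beta = discount factor; theta j = theta^1_j. *)

Section Bandit.
Variables (R : realType) (T : finType).
Variables (N1 : {set T}) (p : bool -> T -> T -> R) (beta : R) (theta : T -> R).

Definition active_set (S : {set T}) : {set T} := S :|: N1.

Definition act (S : {set T}) (i : T) : bool := i \in active_set S.

Fixpoint Pt (S : {set T}) (t : nat) (i j : T) : R :=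
  match t with
  | 0 => (i == j)%:R
  | t'.+1 => \sum_(k : T) Pt S t' i k * p (act S k) k j
  end.

(* x^{a,S}_{ij} = E^S_i [ sum_t 1{X(t)=j, a(t)=a} beta^t ]
               = sum_t beta^t P^S_i(X(t)=j) 1{a^S(j) = a} *)
Definition xm (a : bool) (S : {set T}) (i j : T) : R :=
  limn (series (fun t : nat => beta ^+ t * Pt S t i j * (act S j == a)%:R)).

(* b^S_i = E^S_i [ sum_t theta^1_{X(t)} a(t) beta^t ] *)
Definition bm (S : {set T}) (i : T) : R :=
  limn (series (fun t : nat =>
    beta ^+ t * \sum_(j : T) Pt S t i j * theta j * (act S j)%:R)).

Definition wm (S : {set T}) (i : T) : R :=
  theta i * (i \notin N1)%:R + beta * \sum_(j : T) (p true i j - p false i j) * bm S j.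

End Bandit.

Definition bandit_model (R : realType) (T : finType) (N1 : {set T})
    (p : bool -> T -> T -> R) (beta : R) (theta : T -> R) : Prop :=
  [/\ forall a i j, 0 <= p a i j,
      forall a i, \sum_(j : T) p a i j = 1,
      forall i j, i \in N1 -> p true i j = p false i j,
      0 < beta < 1 &
      forall j, 0 < theta j].

(* Main.v *)
Require Import Defs.
From HB Require Import structures.
From mathcomp Require Import all_boot all_order all_algebra.
From mathcomp Require Import all_classical all_reals all_analysis.
From mathcomp Require Import ring lra.
Import Order.TTheory GRing.Theory Num.Theory numFieldNormedType.Exports.
Local Open Scope classical_set_scope.
Local Open Scope ring_scope.

Lemma PtS {R : realType} {T : finType} (N1 : {set T}) (p : bool -> T -> T -> R) A t i j :
  Pt N1 p A t.+1 i j = \sum_k Pt N1 p A t i k * p (act N1 A k) k j.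
Proof. by []. Qed.

Lemma PtS_left {R : realType} {T : finType} (N1 : {set T}) (p : bool -> T -> T -> R) A t i j :
  Pt N1 p A t.+1 i j = \sum_k p (act N1 A i) i k * Pt N1 p A t k j.
Proof.
elim: t i j => [|t IH] i j.
  rewrite /= (bigD1 i) //= eqxx mul1r big1 ?addr0; last first.
    by move=> k /negbTE; rewrite eq_sym => ->; rewrite mul0r.
  rewrite (bigD1 j) //= eqxx mulr1 big1 ?addr0 //.
  by move=> k /negbTE ->; rewrite mulr0.
rewrite (PtS N1 p A t.+1 i j).
under eq_bigr do rewrite IH mulr_suml.
rewrite exchange_big; apply: eq_bigr => k _.
by rewrite PtS mulr_sumr; apply: eq_bigr => l _; rewrite mulrA.
Qed.

Lemma Pt_ge0 {R : realType} {T : finType} (N1 : {set T}) (p : bool -> T -> T -> R) A t i j :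
  (forall a i j, 0 <= p a i j) -> 0 <= Pt N1 p A t i j.
Proof.
move=> hp; elim: t i j => [|t IH] i j /=; first by rewrite ler0n.
by apply: sumr_ge0 => k _; apply: mulr_ge0.
Qed.

Lemma Pt_sum1 {R : realType} {T : finType} (N1 : {set T}) (p : bool -> T -> T -> R) A t i :
  (forall a i, \sum_j p a i j = 1) -> \sum_j Pt N1 p A t i j = 1.
Proof.
move=> hp; elim: t i => [|t IH] i /=.
  by rewrite (bigD1 i) //= eqxx big1 ?addr0 // => k; rewrite eq_sym => /negbTE ->.
rewrite exchange_big /= -[RHS](IH i); apply: eq_bigr => k _.
by rewrite -mulr_sumr hp mulr1.
Qed.

Lemma Pt_le1 {R : realType} {T : finType} (N1 : {set T}) (p : bool -> T -> T -> R) A t i j :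
  (forall a i j, 0 <= p a i j) -> (forall a i, \sum_j p a i j = 1) -> Pt N1 p A t i j <= 1.
Proof.
move=> h0 h1; rewrite -(Pt_sum1 N1 p A t i h1) (bigD1 j) //= lerDl.
by apply: sumr_ge0 => k _; apply: Pt_ge0.
Qed.

Lemma cvg_bigsum {R : realType} {T : finType} (u : T -> nat -> R) (l : T -> R) :
  (forall k, u k @ \oo --> l k) -> (fun n => \sum_k u k n) @ \oo --> \sum_k l k.
Proof.
move=> H; rewrite -fct_sumE.
elim/big_rec2: _ => [|k y1 y2 _ Hy]; first exact: cvg_cst.
exact: cvgD.
Qed.
Definition vterm {R : realType} {T : finType} (N1 : {set T}) (p : bool -> T -> T -> R) (beta : R)
  A (f : T -> R) i (t : nat) := beta ^+ t * \sum_k Pt N1 p A t i k * f k.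

Definition Vf {R : realType} {T : finType} (N1 : {set T}) (p : bool -> T -> T -> R) (beta : R)
  A (f : T -> R) i := limn (series (vterm N1 p beta A f i)).

Lemma cvg_V {R : realType} {T : finType} (N1 : {set T}) (p : bool -> T -> T -> R) (beta : R) A f i :
  (forall a i j, 0 <= p a i j) -> (forall a i, \sum_j p a i j = 1) -> 0 <= beta < 1 ->
  cvgn (series (vterm N1 p beta A f i)).
Proof.
move=> h0 h1 /andP[b0 b1].
apply: normed_cvg.
apply: (@series_le_cvg _ _ (geometric (\sum_k `|f k|) beta)).
- by move=> n; rewrite normr_ge0.
- by move=> n; rewrite /geometric; apply: mulr_ge0; [apply: sumr_ge0 => k _; exact: normr_ge0|exact: exprn_ge0].
- move=> n /=; rewrite /vterm /geometric.
  change (`|(beta ^+ n * \sum_k Pt N1 p A n i k * f k : R)| <= (\sum_k `|f k|) * beta ^+ n).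
  rewrite normrM ger0_norm ?exprn_ge0 // mulrC.
  apply: ler_wpM2r; first exact: exprn_ge0.
  apply: le_trans (ler_norm_sum _ _ _) _; apply: ler_sum => k _.
  rewrite normrM ger0_norm ?Pt_ge0 //.
  by rewrite -[leRHS]mul1r; apply: ler_wpM2r; [exact: normr_ge0| exact: Pt_le1].
- by apply: is_cvg_geometric_series; rewrite ger0_norm.
Qed.

Lemma vterm0 {R : realType} {T : finType} (N1 : {set T}) (p : bool -> T -> T -> R) (beta : R) A f i :
  vterm N1 p beta A f i 0 = f i.
Proof.
rewrite /vterm expr0 mul1r /= (bigD1 i) //= eqxx mul1r big1 ?addr0 //.
by move=> k /negbTE; rewrite eq_sym => ->; rewrite mul0r.
Qed.

Lemma vtermS {R : realType} {T : finType} (N1 : {set T}) (p : bool -> T -> T -> R) (beta : R) A f i t :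
  vterm N1 p beta A f i t.+1 = beta * \sum_k p (act N1 A i) i k * vterm N1 p beta A f k t.
Proof.
rewrite /vterm exprS -mulrA; congr (_ * _).
under eq_bigr do rewrite PtS_left mulr_suml.
rewrite exchange_big mulr_sumr; apply: eq_bigr => k _.
rewrite mulrCA; congr (_ * _); rewrite mulr_sumr; apply: eq_bigr => l _.
by rewrite mulrA.
Qed.

Lemma seriesS_V {R : realType} {T : finType} (N1 : {set T}) (p : bool -> T -> T -> R) (beta : R) A f i n :
  series (vterm N1 p beta A f i) n.+1 =
  f i + beta * \sum_k p (act N1 A i) i k * series (vterm N1 p beta A f k) n.
Proof.
rewrite /series /= big_nat_recl // vterm0; congr (_ + _).
under eq_bigr do rewrite vtermS.
rewrite -mulr_sumr exchange_big /=; congr (_ * _); apply: eq_bigr => k _.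
by rewrite mulr_sumr.
Qed.

Lemma Bellman {R : realType} {T : finType} (N1 : {set T}) (p : bool -> T -> T -> R) (beta : R) A f i :
  (forall a i j, 0 <= p a i j) -> (forall a i, \sum_j p a i j = 1) -> 0 <= beta < 1 ->
  Vf N1 p beta A f i = f i + beta * \sum_k p (act N1 A i) i k * Vf N1 p beta A f k.
Proof.
move=> h0 h1 hb.
have H : (fun n => series (vterm N1 p beta A f i) n.+1) @ \oo -->
   (f i + beta * \sum_k p (act N1 A i) i k * Vf N1 p beta A f k).
  rewrite (_ : (fun n => _) = fun n => f i + beta * \sum_k p (act N1 A i) i k * series (vterm N1 p beta A f k) n); last first.
    by apply/funext => n; rewrite seriesS_V.
  apply: cvgD; first exact: cvg_cst.
  apply: cvgMl_tmp; apply: (cvg_bigsum (fun k n => p (act N1 A i) i k * series (vterm N1 p beta A f k) n)) => k.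
  by apply: cvgMl_tmp; apply: cvg_V.
rewrite (cvg_shiftS (series (vterm N1 p beta A f i))) in H.
exact: cvg_lim H.
Qed.

Lemma fix_zero {R : realType} {T : finType} (N1 : {set T}) (p : bool -> T -> T -> R) (beta : R) A (d : T -> R) :
  (forall a i j, 0 <= p a i j) -> (forall a i, \sum_j p a i j = 1) -> 0 <= beta < 1 ->
  (forall k, d k = beta * \sum_l p (act N1 A k) k l * d l) -> forall k, d k = 0.
Proof.
move=> h0 h1 /andP[b0 b1] hd k0.
pose M := \big[Order.Def.max/0]_l `|d l|.
have Hle : forall k, `|d k| <= M by move=> k; exact: (le_bigmax 0 (fun l => `|d l|) k).
have HM : M <= beta * M.
  apply: bigmax_le; first by apply: mulr_ge0 => //; exact: le_trans (normr_ge0 _) (Hle k0).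
  move=> k _; rewrite hd normrM ger0_norm //; apply: ler_wpM2l => //.
  apply: le_trans (ler_norm_sum _ _ _) _.
  apply: le_trans (_ : \sum_l p (act N1 A k) k l * M <= _); last by rewrite -mulr_suml h1 mul1r.
  apply: ler_sum => l _; rewrite normrM ger0_norm //; apply: ler_wpM2l => //.
have HM' : M <= 0 by nra.
by apply/eqP; rewrite -normr_le0; apply: le_trans (Hle k0) HM'.
Qed.

Lemma fix_uniq {R : realType} {T : finType} (N1 : {set T}) (p : bool -> T -> T -> R) (beta : R) A (g u v : T -> R) :
  (forall a i j, 0 <= p a i j) -> (forall a i, \sum_j p a i j = 1) -> 0 <= beta < 1 ->
  (forall k, u k = g k + beta * \sum_l p (act N1 A k) k l * u l) ->
  (forall k, v k = g k + beta * \sum_l p (act N1 A k) k l * v l) ->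
  forall k, u k = v k.
Proof.
move=> h0 h1 hb hu hv k; apply/eqP; rewrite -subr_eq0; apply/eqP.
apply: (fix_zero N1 p beta A (fun k => u k - v k) h0 h1 hb) => {}k.
rewrite {1}hu {1}hv.
under [X in _ = _ * X]eq_bigr do rewrite mulrBr.
rewrite sumrB; ring.
Qed.

Lemma bm_Vf {R : realType} {T : finType} (N1 : {set T}) (p : bool -> T -> T -> R) (beta : R) theta S :
  bm N1 p beta theta S = Vf N1 p beta S (fun k => theta k * (act N1 S k)%:R).
Proof.
apply/funext => i; rewrite /bm /Vf /vterm; congr (limn (series _)); apply/funext => t.
by congr (_ * _); apply: eq_bigr => k _; rewrite mulrA.
Qed.

Lemma xm_Vf {R : realType} {T : finType} (N1 : {set T}) (p : bool -> T -> T -> R) (beta : R) a S i j :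
  act N1 S j = a -> xm N1 p beta a S i j = Vf N1 p beta S (fun k => (k == j)%:R) i.
Proof.
move=> ha; rewrite /xm /Vf /vterm ha eqxx; congr (limn (series _)); apply/funext => t.
rewrite mulr1; congr (_ * _).
rewrite (bigD1 j) //= eqxx mulr1 big1 ?addr0 //.
by move=> k /negbTE ->; rewrite mulr0.
Qed.

Theorem corollary1 (R : realType) (T : finType) (N1 : {set T})
    (p : bool -> T -> T -> R) (beta : R) (theta : T -> R) :
  bandit_model N1 p beta theta ->
  forall (i : T) (S : {set T}), S \subset ~: N1 ->
    (forall j, j \in ~: N1 -> j \notin S ->
       bm N1 p beta theta (j |: S) i
       = bm N1 p beta theta S i
         + wm N1 p beta theta S j * xm N1 p beta true (j |: S) i j) /\
    (forall j, j \in S ->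
       bm N1 p beta theta S i
       = bm N1 p beta theta (S :\ j) i
         + wm N1 p beta theta S j * xm N1 p beta false (S :\ j) i j).
Proof.
case=> h0 h1 _ /andP[b0 b1] _ i S sub.
have hb : 0 <= beta < 1 by rewrite b1 ltW.
split.
- move=> j jN jS.
  have jN' : j \notin N1 by rewrite inE in jN.
  have aSj : act N1 S j = false by rewrite /act /active_set finset.in_setU (negbTE jS) (negbTE jN').
  have aS'j : act N1 (j |: S) j = true by rewrite /act /active_set finset.in_setU finset.in_setU1 eqxx.
  have aSk : forall k, k != j -> act N1 (j |: S) k = act N1 S k.
    by move=> k kj; rewrite /act /active_set !inE (negbTE kj).
  rewrite (xm_Vf _ _ _ _ _ i _ aS'j) /wm !bm_Vf.
  set bS := Vf N1 p beta S _.
  set g := Vf N1 p beta (j |: S) (fun k => (k == j)%:R).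
  set w := theta j * _ + _.
  pose G k := theta k * (act N1 (j |: S) k)%:R.
  apply: (fix_uniq N1 p beta (j |: S) G (Vf N1 p beta (j |: S) G) (fun k => bS k + w * g k) h0 h1 hb _ _ i) => k /=.
    exact: Bellman.
  have Eb := Bellman N1 p beta S (fun k => theta k * (act N1 S k)%:R) k h0 h1 hb.
  have Eg := Bellman N1 p beta (j |: S) (fun k => (k == j)%:R) k h0 h1 hb.
  rewrite -/bS in Eb; rewrite -/g in Eg.
  under [X in _ = _ + _ * X]eq_bigr do rewrite mulrDr mulrCA.
  rewrite big_split /= -mulr_sumr {1}Eb {1}Eg.
  have [->|kj] := eqVneq k j.
    have Ew : w = theta j * 1 + beta * (\sum_l p true j l * bS l - \sum_l p false j l * bS l).
      by rewrite /w jN' -sumrB; congr (_ + _ * _); apply: eq_bigr => l _; rewrite mulrBl.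
    rewrite /G aSj aS'j Ew /=; ring.
  by rewrite /G (aSk k kj) /=; ring.
- move=> j jS.
  have jN' : j \notin N1 by move/fintype.subsetP: sub => /(_ j jS); rewrite inE.
  have aSj : act N1 S j = true by rewrite /act /active_set finset.in_setU jS.
  have aS'j : act N1 (S :\ j) j = false
    by rewrite /act /active_set finset.in_setU finset.in_setD1 eqxx (negbTE jN').
  have aSk : forall k, k != j -> act N1 (S :\ j) k = act N1 S k.
    by move=> k kj; rewrite /act /active_set !inE kj.
  rewrite (xm_Vf _ _ _ _ _ i _ aS'j) /wm !bm_Vf.
  set bS := Vf N1 p beta S _.
  set g := Vf N1 p beta (S :\ j) (fun k => (k == j)%:R).
  set bS' := Vf N1 p beta (S :\ j) _.
  set w := theta j * _ + _.
  pose F k := theta k * (act N1 (S :\ j) k)%:R + w * (k == j)%:R.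
  apply: (fix_uniq N1 p beta (S :\ j) F bS (fun k => bS' k + w * g k) h0 h1 hb _ _ i) => k /=.
    have Eb := Bellman N1 p beta S (fun k => theta k * (act N1 S k)%:R) k h0 h1 hb.
    rewrite -/bS in Eb; rewrite {1}Eb /F.
    have [->|kj] := eqVneq k j.
      have Ew : w = theta j * 1 + beta * (\sum_l p true j l * bS l - \sum_l p false j l * bS l).
        by rewrite /w jN' -sumrB; congr (_ + _ * _); apply: eq_bigr => l _; rewrite mulrBl.
      rewrite aSj aS'j Ew /=; ring.
    by rewrite (aSk k kj) /=; ring.
  have Eb := Bellman N1 p beta (S :\ j) (fun k => theta k * (act N1 (S :\ j) k)%:R) k h0 h1 hb.
  have Eg := Bellman N1 p beta (S :\ j) (fun k => (k == j)%:R) k h0 h1 hb.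
  rewrite -/bS' in Eb; rewrite -/g in Eg.
  under [X in _ = _ + _ * X]eq_bigr do rewrite mulrDr mulrCA.
  rewrite big_split /= -mulr_sumr {1}Eb {1}Eg /F; ring.
Qed.
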